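(* Let $\gamma(s)$ be an arc-length parametrized triharmonic Frenet helix immersed in a BCV space $M(a,b)$ with $4a\neq b^2$. If the torsion of $\gamma$ is not zero, then $\gamma$ is a geodesic of a suitable Hopf cylinder.
   Context: For real $a,b$, the BCV space $M(a,b)$ is $\{(x,y,z)\in\mathbb{R}^3:\lambda_a=1+a(x^2+y^2)>0\}$ with the metric $$g_{a,b}=\frac{dx^2+dy^2}{[1+a(x^2+y^2)]^2}+\left(dz+\frac{b}{2}\,\frac{y\,dx-x\,dy}{1+a(x^2+y^2)}\right)^2.$$ The vector field $E_3=\partial_z$ is a Killing field whose flow is $\psi_t(x,y,z)=(x,y,z+t)$. A Hopf cylinder is a surface invariant under this flow, parametrized as $\mathbf{x}(s,t)=\psi_t(\widetilde\alpha(s))$ with $\widetilde\alpha$ an arc-length parametrized curve orthogonal to $E_3$. An arc-length parametrized curve $\gamma$ with $T=\gamma'$ is triharmonic if $\nabla_T^5T+R(\nabla_T^3T,T)T-R(\nabla_T^2T,\nabla_TT)T=0$, where $\nabla$ is the Levi-Civita connection and $R(X,Y)=\nabla_X\nabla_Y-\nabla_Y\nabla_X-\nabla_{[X,Y]}$. A Frenet helix is a non-geodesic curve with constant curvature $\kappa$ and constant torsion $\tau$, defined by $\nabla_TT=\kappa N$, $\nabla_TN=-\kappa T+\tau B$, $\nabla_TB=-\tau N$. *)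

(* Defs.v *)
From Stdlib Require Import Reals Arith.
From Coquelicot Require Import Coquelicot.
Open Scope R_scope.

(* Points / tangent vectors in coordinates: index 0 = x, 1 = y, 2 = z
   (only indices 0,1,2 are used). Tangent vectors are expressed in the
   coordinate basis (d/dx, d/dy, d/dz). *)
Definition vec := nat -> R.

Definition sum3 (f : nat -> R) : R := f 0%nat + f 1%nat + f 2%nat.

Definition lam (a : R) (p : vec) : R := 1 + a * (p 0%nat ^ 2 + p 1%nat ^ 2).

Definition inM (a : R) (p : vec) : Prop := 0 < lam a p.

(* the 1-form theta = dz + (b/2) (y dx - x dy)/lambda_a, componentwise *)
Definition theta (a b : R) (p : vec) (i : nat) : R :=
  match i with
  | 0%nat => b / 2 * p 1%nat / lam a p
  | 1%nat => - (b / 2 * p 0%nat / lam a p)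
  | _ => 1
  end.

Definition kdelta2 (i j : nat) : R :=
  if (Nat.eqb i j && Nat.ltb i 2)%bool then 1 else 0.

Definition gmet (a b : R) (p : vec) (i j : nat) : R :=
  kdelta2 i j / (lam a p) ^ 2 + theta a b p i * theta a b p j.

Definition cof3 (m : nat -> nat -> R) (i j : nat) : R :=
  m ((i+1) mod 3)%nat ((j+1) mod 3)%nat * m ((i+2) mod 3)%nat ((j+2) mod 3)%nat
  - m ((i+1) mod 3)%nat ((j+2) mod 3)%nat * m ((i+2) mod 3)%nat ((j+1) mod 3)%nat.
Definition det3 (m : nat -> nat -> R) : R := sum3 (fun j => m 0%nat j * cof3 m 0%nat j).
Definition ginv (a b : R) (p : vec) (i j : nat) : R :=
  cof3 (gmet a b p) j i / det3 (gmet a b p).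

Definition upd (p : vec) (i : nat) (h : R) : vec :=
  fun k => if Nat.eqb k i then h else p k.
Definition pd (i : nat) (f : vec -> R) (p : vec) : R :=
  Derive (fun h => f (upd p i h)) (p i).

Definition Gam (a b : R) (l i j : nat) (p : vec) : R :=
  / 2 * sum3 (fun m => ginv a b p l m *
     (pd i (fun q => gmet a b q m j) p + pd j (fun q => gmet a b q m i) p
      - pd m (fun q => gmet a b q i j) p)).

(* R(d_i,d_j) d_k = Rm l i j k d_l,  with R(X,Y) = [nabla_X,nabla_Y] - nabla_[X,Y] *)
Definition Rm (a b : R) (l i j k : nat) (p : vec) : R :=
  pd i (Gam a b l j k) p - pd j (Gam a b l i k) p
  + sum3 (fun m => Gam a b l i m p * Gam a b m j k p)
  - sum3 (fun m => Gam a b l j m p * Gam a b m i k p).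

Definition Rcurv (a b : R) (p : vec) (X Y Z : vec) : vec :=
  fun l => sum3 (fun i => sum3 (fun j => sum3 (fun k =>
             X i * Y j * Z k * Rm a b l i j k p))).

Definition ginner (a b : R) (p : vec) (X Y : vec) : R :=
  sum3 (fun i => sum3 (fun j => gmet a b p i j * X i * Y j)).

Definition vel (c : R -> vec) (s : R) : vec := fun i => Derive (fun t => c t i) s.

Definition covd (a b : R) (c : R -> vec) (V : R -> vec) (s : R) : vec :=
  fun l => Derive (fun t => V t l) s
           + sum3 (fun i => sum3 (fun j => Gam a b l i j (c s) * vel c s i * V s j)).

Fixpoint covT (a b : R) (c : R -> vec) (n : nat) : R -> vec :=
  match n with
  | O => vel c
  | S n' => covd a b c (covT a b c n')
  end.

Definition inI (lo hi : Rbar) (s : R) : Prop := Rbar_lt lo s /\ Rbar_lt s hi.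

Definition smooth_on (P : R -> Prop) (f : R -> R) : Prop :=
  forall (n : nat) (s : R), P s -> ex_derive (Derive_n f n) s.

Definition curve_in_M (a : R) (lo hi : Rbar) (c : R -> vec) : Prop :=
  Rbar_lt lo hi /\
  (forall i, (i < 3)%nat -> smooth_on (inI lo hi) (fun t => c t i)) /\
  (forall s, inI lo hi s -> inM a (c s)).

Definition arclength (a b : R) (lo hi : Rbar) (c : R -> vec) : Prop :=
  forall s, inI lo hi s -> ginner a b (c s) (vel c s) (vel c s) = 1.

Definition triharmonic (a b : R) (lo hi : Rbar) (c : R -> vec) : Prop :=
  forall s, inI lo hi s -> forall l, (l < 3)%nat ->
    covT a b c 5 s l
    + Rcurv a b (c s) (covT a b c 3 s) (vel c s) (vel c s) l
    - Rcurv a b (c s) (covT a b c 2 s) (covT a b c 1 s) (vel c s) l = 0.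

Definition frenet_helix (a b : R) (lo hi : Rbar) (c : R -> vec) (kappa tau : R) : Prop :=
  0 < kappa /\
  exists N B : R -> vec,
    (forall i, (i < 3)%nat -> forall s, inI lo hi s ->
        ex_derive (fun t => N t i) s /\ ex_derive (fun t => B t i) s) /\
    (forall s, inI lo hi s ->
       let T := vel c s in
       ginner a b (c s) T T = 1 /\ ginner a b (c s) (N s) (N s) = 1 /\
       ginner a b (c s) (B s) (B s) = 1 /\ ginner a b (c s) T (N s) = 0 /\
       ginner a b (c s) T (B s) = 0 /\ ginner a b (c s) (N s) (B s) = 0 /\
       (forall l, (l < 3)%nat ->
          covT a b c 1 s l = kappa * N s l /\
          covd a b c N s l = - kappa * T l + tau * B s l /\
          covd a b c B s l = - tau * N s l)).

Definition E3 : vec := fun i => if Nat.eqb i 2 then 1 else 0.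

Definition psi (t : R) (p : vec) : vec := fun i => if Nat.eqb i 2 then p i + t else p i.

(* c is a geodesic of the Hopf cylinder x(u,t) = psi_t(alpha(u)), where alpha is an
   arc-length parametrized smooth curve in M(a,b) on (lo', hi') orthogonal to E3:
   c lies on the cylinder, c(s) = psi_{t(s)}(alpha(sigma(s))) with sigma, t
   differentiable, and the acceleration nabla_T T of c is orthogonal to the tangent
   plane of the cylinder, spanned by x_u = d psi_t(alpha') (same coordinate
   components as alpha', since psi_t is a translation) and x_t = E3. *)
Definition geodesic_of_hopf_cylinder (a b : R) (lo hi : Rbar) (c : R -> vec) : Prop :=
  exists (lo' hi' : Rbar) (alpha : R -> vec) (sigma tt : R -> R),
    curve_in_M a lo' hi' alpha /\
    arclength a b lo' hi' alpha /\
    (forall u, inI lo' hi' u -> ginner a b (alpha u) (vel alpha u) E3 = 0) /\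
    (forall s, inI lo hi s ->
       inI lo' hi' (sigma s) /\ ex_derive sigma s /\ ex_derive tt s /\
       (forall i, (i < 3)%nat -> c s i = psi (tt s) (alpha (sigma s)) i) /\
       ginner a b (c s) (covT a b c 1 s) (vel alpha (sigma s)) = 0 /\
       ginner a b (c s) (covT a b c 1 s) E3 = 0).

(* Main.v *)
Require Import Defs.
From Stdlib Require Import Reals Lra Lia.
From Coquelicot Require Import Coquelicot.
Open Scope R_scope.

Ltac nzL H := match goal with
 | |- ?A * ?B <> 0 => apply Rmult_integral_contrapositive_currified; nzL H
 | |- ?A ^ _ <> 0 => apply pow_nonzero; nzL H
 | |- _ <> 0 => first [lra | let Hc := fresh in intro Hc; apply H; rewrite <- Hc; ring]
 end.
Ltac sides H := repeat split; try exact I; try nzL H.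
Definition DG (a b : R) (m i j : nat) (p : vec) : R :=
  match m, i, j with
  | 0, 0, 0 => (((-4)*(p 0%nat)*a + (-1)*(p 0%nat)*(p 1%nat)^2*a*b^2) / (1 + a*((p 0%nat)^2+(p 1%nat)^2))^3)
  | 0, 0, 1 => (((-1/4)*(p 1%nat)*b^2 + (-1/4)*(p 1%nat)^3*a*b^2 + (3/4)*(p 0%nat)^2*(p 1%nat)*a*b^2) / (1 + a*((p 0%nat)^2+(p 1%nat)^2))^3)
  | 0, 0, 2 => (((-1)*(p 0%nat)*(p 1%nat)*a*b) / (1 + a*((p 0%nat)^2+(p 1%nat)^2))^2)
  | 0, 1, 0 => (((-1/4)*(p 1%nat)*b^2 + (-1/4)*(p 1%nat)^3*a*b^2 + (3/4)*(p 0%nat)^2*(p 1%nat)*a*b^2) / (1 + a*((p 0%nat)^2+(p 1%nat)^2))^3)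
  | 0, 1, 1 => (((1/2)*(p 0%nat)*b^2 + (-4)*(p 0%nat)*a + (1/2)*(p 0%nat)*(p 1%nat)^2*a*b^2 + (-1/2)*(p 0%nat)^3*a*b^2) / (1 + a*((p 0%nat)^2+(p 1%nat)^2))^3)
  | 0, 1, 2 => (((-1/2)*b + (-1/2)*(p 1%nat)^2*a*b + (1/2)*(p 0%nat)^2*a*b) / (1 + a*((p 0%nat)^2+(p 1%nat)^2))^2)
  | 0, 2, 0 => (((-1)*(p 0%nat)*(p 1%nat)*a*b) / (1 + a*((p 0%nat)^2+(p 1%nat)^2))^2)
  | 0, 2, 1 => (((-1/2)*b + (-1/2)*(p 1%nat)^2*a*b + (1/2)*(p 0%nat)^2*a*b) / (1 + a*((p 0%nat)^2+(p 1%nat)^2))^2)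
  | 0, 2, 2 => 0
  | 1, 0, 0 => (((1/2)*(p 1%nat)*b^2 + (-4)*(p 1%nat)*a + (-1/2)*(p 1%nat)^3*a*b^2 + (1/2)*(p 0%nat)^2*(p 1%nat)*a*b^2) / (1 + a*((p 0%nat)^2+(p 1%nat)^2))^3)
  | 1, 0, 1 => (((-1/4)*(p 0%nat)*b^2 + (3/4)*(p 0%nat)*(p 1%nat)^2*a*b^2 + (-1/4)*(p 0%nat)^3*a*b^2) / (1 + a*((p 0%nat)^2+(p 1%nat)^2))^3)
  | 1, 0, 2 => (((1/2)*b + (-1/2)*(p 1%nat)^2*a*b + (1/2)*(p 0%nat)^2*a*b) / (1 + a*((p 0%nat)^2+(p 1%nat)^2))^2)
  | 1, 1, 0 => (((-1/4)*(p 0%nat)*b^2 + (3/4)*(p 0%nat)*(p 1%nat)^2*a*b^2 + (-1/4)*(p 0%nat)^3*a*b^2) / (1 + a*((p 0%nat)^2+(p 1%nat)^2))^3)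
  | 1, 1, 1 => (((-4)*(p 1%nat)*a + (-1)*(p 0%nat)^2*(p 1%nat)*a*b^2) / (1 + a*((p 0%nat)^2+(p 1%nat)^2))^3)
  | 1, 1, 2 => (((1)*(p 0%nat)*(p 1%nat)*a*b) / (1 + a*((p 0%nat)^2+(p 1%nat)^2))^2)
  | 1, 2, 0 => (((1/2)*b + (-1/2)*(p 1%nat)^2*a*b + (1/2)*(p 0%nat)^2*a*b) / (1 + a*((p 0%nat)^2+(p 1%nat)^2))^2)
  | 1, 2, 1 => (((1)*(p 0%nat)*(p 1%nat)*a*b) / (1 + a*((p 0%nat)^2+(p 1%nat)^2))^2)
  | 1, 2, 2 => 0
  | 2, 0, 0 => 0
  | 2, 0, 1 => 0
  | 2, 0, 2 => 0
  | 2, 1, 0 => 0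
  | 2, 1, 1 => 0
  | 2, 1, 2 => 0
  | 2, 2, 0 => 0
  | 2, 2, 1 => 0
  | 2, 2, 2 => 0
  | _, _, _ => 0
  end.

Definition GI (a b : R) (l m : nat) (p : vec) : R :=
  match l, m with
  | 0, 0 => ((1) + (2)*(p 1%nat)^2*a + (1)*(p 1%nat)^4*a^2 + (2)*(p 0%nat)^2*a + (2)*(p 0%nat)^2*(p 1%nat)^2*a^2 + (1)*(p 0%nat)^4*a^2)
  | 0, 1 => 0
  | 0, 2 => ((-1/2)*(p 1%nat)*b + (-1/2)*(p 1%nat)^3*a*b + (-1/2)*(p 0%nat)^2*(p 1%nat)*a*b)
  | 1, 0 => 0
  | 1, 1 => ((1) + (2)*(p 1%nat)^2*a + (1)*(p 1%nat)^4*a^2 + (2)*(p 0%nat)^2*a + (2)*(p 0%nat)^2*(p 1%nat)^2*a^2 + (1)*(p 0%nat)^4*a^2)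
  | 1, 2 => ((1/2)*(p 0%nat)*b + (1/2)*(p 0%nat)*(p 1%nat)^2*a*b + (1/2)*(p 0%nat)^3*a*b)
  | 2, 0 => ((-1/2)*(p 1%nat)*b + (-1/2)*(p 1%nat)^3*a*b + (-1/2)*(p 0%nat)^2*(p 1%nat)*a*b)
  | 2, 1 => ((1/2)*(p 0%nat)*b + (1/2)*(p 0%nat)*(p 1%nat)^2*a*b + (1/2)*(p 0%nat)^3*a*b)
  | 2, 2 => ((1) + (1/4)*(p 1%nat)^2*b^2 + (1/4)*(p 0%nat)^2*b^2)
  | _, _ => 0
  end.

Definition GE (a b : R) (l i j : nat) (p : vec) : R :=
  match l, i, j with
  | 0, 0, 0 => (((-2)*(p 0%nat)*a) / (1 + a*((p 0%nat)^2+(p 1%nat)^2))^1)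
  | 0, 0, 1 => (((1/4)*(p 1%nat)*b^2 + (-2)*(p 1%nat)*a) / (1 + a*((p 0%nat)^2+(p 1%nat)^2))^1)
  | 0, 0, 2 => 0
  | 0, 1, 0 => (((1/4)*(p 1%nat)*b^2 + (-2)*(p 1%nat)*a) / (1 + a*((p 0%nat)^2+(p 1%nat)^2))^1)
  | 0, 1, 1 => (((-1/2)*(p 0%nat)*b^2 + (2)*(p 0%nat)*a) / (1 + a*((p 0%nat)^2+(p 1%nat)^2))^1)
  | 0, 1, 2 => ((1/2)*b)
  | 0, 2, 0 => 0
  | 0, 2, 1 => ((1/2)*b)
  | 0, 2, 2 => 0
  | 1, 0, 0 => (((-1/2)*(p 1%nat)*b^2 + (2)*(p 1%nat)*a) / (1 + a*((p 0%nat)^2+(p 1%nat)^2))^1)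
  | 1, 0, 1 => (((1/4)*(p 0%nat)*b^2 + (-2)*(p 0%nat)*a) / (1 + a*((p 0%nat)^2+(p 1%nat)^2))^1)
  | 1, 0, 2 => ((-1/2)*b)
  | 1, 1, 0 => (((1/4)*(p 0%nat)*b^2 + (-2)*(p 0%nat)*a) / (1 + a*((p 0%nat)^2+(p 1%nat)^2))^1)
  | 1, 1, 1 => (((-2)*(p 1%nat)*a) / (1 + a*((p 0%nat)^2+(p 1%nat)^2))^1)
  | 1, 1, 2 => 0
  | 1, 2, 0 => ((-1/2)*b)
  | 1, 2, 1 => 0
  | 1, 2, 2 => 0
  | 2, 0, 0 => (((-1/4)*(p 0%nat)*(p 1%nat)*b^3 + (1)*(p 0%nat)*(p 1%nat)*a*b) / (1 + a*((p 0%nat)^2+(p 1%nat)^2))^2)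
  | 2, 0, 1 => (((-1/8)*(p 1%nat)^2*b^3 + (1/2)*(p 1%nat)^2*a*b + (1/8)*(p 0%nat)^2*b^3 + (-1/2)*(p 0%nat)^2*a*b) / (1 + a*((p 0%nat)^2+(p 1%nat)^2))^2)
  | 2, 0, 2 => (((-1/4)*(p 0%nat)*b^2) / (1 + a*((p 0%nat)^2+(p 1%nat)^2))^1)
  | 2, 1, 0 => (((-1/8)*(p 1%nat)^2*b^3 + (1/2)*(p 1%nat)^2*a*b + (1/8)*(p 0%nat)^2*b^3 + (-1/2)*(p 0%nat)^2*a*b) / (1 + a*((p 0%nat)^2+(p 1%nat)^2))^2)
  | 2, 1, 1 => (((1/4)*(p 0%nat)*(p 1%nat)*b^3 + (-1)*(p 0%nat)*(p 1%nat)*a*b) / (1 + a*((p 0%nat)^2+(p 1%nat)^2))^2)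
  | 2, 1, 2 => (((-1/4)*(p 1%nat)*b^2) / (1 + a*((p 0%nat)^2+(p 1%nat)^2))^1)
  | 2, 2, 0 => (((-1/4)*(p 0%nat)*b^2) / (1 + a*((p 0%nat)^2+(p 1%nat)^2))^1)
  | 2, 2, 1 => (((-1/4)*(p 1%nat)*b^2) / (1 + a*((p 0%nat)^2+(p 1%nat)^2))^1)
  | 2, 2, 2 => 0
  | _, _, _ => 0
  end.

Definition DGE (a b : R) (m l i j : nat) (p : vec) : R :=
  match m, l, i, j with
  | 0, 0, 0, 0 => (((-2)*a + (-2)*(p 1%nat)^2*a^2 + (2)*(p 0%nat)^2*a^2) / (1 + a*((p 0%nat)^2+(p 1%nat)^2))^2)
  | 0, 0, 0, 1 => (((-1/2)*(p 0%nat)*(p 1%nat)*a*b^2 + (4)*(p 0%nat)*(p 1%nat)*a^2) / (1 + a*((p 0%nat)^2+(p 1%nat)^2))^2)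
  | 0, 0, 0, 2 => 0
  | 0, 0, 1, 0 => (((-1/2)*(p 0%nat)*(p 1%nat)*a*b^2 + (4)*(p 0%nat)*(p 1%nat)*a^2) / (1 + a*((p 0%nat)^2+(p 1%nat)^2))^2)
  | 0, 0, 1, 1 => (((-1/2)*b^2 + (2)*a + (-1/2)*(p 1%nat)^2*a*b^2 + (2)*(p 1%nat)^2*a^2 + (1/2)*(p 0%nat)^2*a*b^2 + (-2)*(p 0%nat)^2*a^2) / (1 + a*((p 0%nat)^2+(p 1%nat)^2))^2)
  | 0, 0, 1, 2 => 0
  | 0, 0, 2, 0 => 0
  | 0, 0, 2, 1 => 0
  | 0, 0, 2, 2 => 0
  | 0, 1, 0, 0 => (((1)*(p 0%nat)*(p 1%nat)*a*b^2 + (-4)*(p 0%nat)*(p 1%nat)*a^2) / (1 + a*((p 0%nat)^2+(p 1%nat)^2))^2)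
  | 0, 1, 0, 1 => (((1/4)*b^2 + (-2)*a + (1/4)*(p 1%nat)^2*a*b^2 + (-2)*(p 1%nat)^2*a^2 + (-1/4)*(p 0%nat)^2*a*b^2 + (2)*(p 0%nat)^2*a^2) / (1 + a*((p 0%nat)^2+(p 1%nat)^2))^2)
  | 0, 1, 0, 2 => 0
  | 0, 1, 1, 0 => (((1/4)*b^2 + (-2)*a + (1/4)*(p 1%nat)^2*a*b^2 + (-2)*(p 1%nat)^2*a^2 + (-1/4)*(p 0%nat)^2*a*b^2 + (2)*(p 0%nat)^2*a^2) / (1 + a*((p 0%nat)^2+(p 1%nat)^2))^2)
  | 0, 1, 1, 1 => (((4)*(p 0%nat)*(p 1%nat)*a^2) / (1 + a*((p 0%nat)^2+(p 1%nat)^2))^2)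
  | 0, 1, 1, 2 => 0
  | 0, 1, 2, 0 => 0
  | 0, 1, 2, 1 => 0
  | 0, 1, 2, 2 => 0
  | 0, 2, 0, 0 => (((-1/4)*(p 1%nat)*b^3 + (1)*(p 1%nat)*a*b + (-1/4)*(p 1%nat)^3*a*b^3 + (1)*(p 1%nat)^3*a^2*b + (3/4)*(p 0%nat)^2*(p 1%nat)*a*b^3 + (-3)*(p 0%nat)^2*(p 1%nat)*a^2*b) / (1 + a*((p 0%nat)^2+(p 1%nat)^2))^3)
  | 0, 2, 0, 1 => (((1/4)*(p 0%nat)*b^3 + (-1)*(p 0%nat)*a*b + (3/4)*(p 0%nat)*(p 1%nat)^2*a*b^3 + (-3)*(p 0%nat)*(p 1%nat)^2*a^2*b + (-1/4)*(p 0%nat)^3*a*b^3 + (1)*(p 0%nat)^3*a^2*b) / (1 + a*((p 0%nat)^2+(p 1%nat)^2))^3)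
  | 0, 2, 0, 2 => (((-1/4)*b^2 + (-1/4)*(p 1%nat)^2*a*b^2 + (1/4)*(p 0%nat)^2*a*b^2) / (1 + a*((p 0%nat)^2+(p 1%nat)^2))^2)
  | 0, 2, 1, 0 => (((1/4)*(p 0%nat)*b^3 + (-1)*(p 0%nat)*a*b + (3/4)*(p 0%nat)*(p 1%nat)^2*a*b^3 + (-3)*(p 0%nat)*(p 1%nat)^2*a^2*b + (-1/4)*(p 0%nat)^3*a*b^3 + (1)*(p 0%nat)^3*a^2*b) / (1 + a*((p 0%nat)^2+(p 1%nat)^2))^3)
  | 0, 2, 1, 1 => (((1/4)*(p 1%nat)*b^3 + (-1)*(p 1%nat)*a*b + (1/4)*(p 1%nat)^3*a*b^3 + (-1)*(p 1%nat)^3*a^2*b + (-3/4)*(p 0%nat)^2*(p 1%nat)*a*b^3 + (3)*(p 0%nat)^2*(p 1%nat)*a^2*b) / (1 + a*((p 0%nat)^2+(p 1%nat)^2))^3)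
  | 0, 2, 1, 2 => (((1/2)*(p 0%nat)*(p 1%nat)*a*b^2) / (1 + a*((p 0%nat)^2+(p 1%nat)^2))^2)
  | 0, 2, 2, 0 => (((-1/4)*b^2 + (-1/4)*(p 1%nat)^2*a*b^2 + (1/4)*(p 0%nat)^2*a*b^2) / (1 + a*((p 0%nat)^2+(p 1%nat)^2))^2)
  | 0, 2, 2, 1 => (((1/2)*(p 0%nat)*(p 1%nat)*a*b^2) / (1 + a*((p 0%nat)^2+(p 1%nat)^2))^2)
  | 0, 2, 2, 2 => 0
  | 1, 0, 0, 0 => (((4)*(p 0%nat)*(p 1%nat)*a^2) / (1 + a*((p 0%nat)^2+(p 1%nat)^2))^2)
  | 1, 0, 0, 1 => (((1/4)*b^2 + (-2)*a + (-1/4)*(p 1%nat)^2*a*b^2 + (2)*(p 1%nat)^2*a^2 + (1/4)*(p 0%nat)^2*a*b^2 + (-2)*(p 0%nat)^2*a^2) / (1 + a*((p 0%nat)^2+(p 1%nat)^2))^2)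
  | 1, 0, 0, 2 => 0
  | 1, 0, 1, 0 => (((1/4)*b^2 + (-2)*a + (-1/4)*(p 1%nat)^2*a*b^2 + (2)*(p 1%nat)^2*a^2 + (1/4)*(p 0%nat)^2*a*b^2 + (-2)*(p 0%nat)^2*a^2) / (1 + a*((p 0%nat)^2+(p 1%nat)^2))^2)
  | 1, 0, 1, 1 => (((1)*(p 0%nat)*(p 1%nat)*a*b^2 + (-4)*(p 0%nat)*(p 1%nat)*a^2) / (1 + a*((p 0%nat)^2+(p 1%nat)^2))^2)
  | 1, 0, 1, 2 => 0
  | 1, 0, 2, 0 => 0
  | 1, 0, 2, 1 => 0
  | 1, 0, 2, 2 => 0
  | 1, 1, 0, 0 => (((-1/2)*b^2 + (2)*a + (1/2)*(p 1%nat)^2*a*b^2 + (-2)*(p 1%nat)^2*a^2 + (-1/2)*(p 0%nat)^2*a*b^2 + (2)*(p 0%nat)^2*a^2) / (1 + a*((p 0%nat)^2+(p 1%nat)^2))^2)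
  | 1, 1, 0, 1 => (((-1/2)*(p 0%nat)*(p 1%nat)*a*b^2 + (4)*(p 0%nat)*(p 1%nat)*a^2) / (1 + a*((p 0%nat)^2+(p 1%nat)^2))^2)
  | 1, 1, 0, 2 => 0
  | 1, 1, 1, 0 => (((-1/2)*(p 0%nat)*(p 1%nat)*a*b^2 + (4)*(p 0%nat)*(p 1%nat)*a^2) / (1 + a*((p 0%nat)^2+(p 1%nat)^2))^2)
  | 1, 1, 1, 1 => (((-2)*a + (2)*(p 1%nat)^2*a^2 + (-2)*(p 0%nat)^2*a^2) / (1 + a*((p 0%nat)^2+(p 1%nat)^2))^2)
  | 1, 1, 1, 2 => 0
  | 1, 1, 2, 0 => 0
  | 1, 1, 2, 1 => 0
  | 1, 1, 2, 2 => 0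
  | 1, 2, 0, 0 => (((-1/4)*(p 0%nat)*b^3 + (1)*(p 0%nat)*a*b + (3/4)*(p 0%nat)*(p 1%nat)^2*a*b^3 + (-3)*(p 0%nat)*(p 1%nat)^2*a^2*b + (-1/4)*(p 0%nat)^3*a*b^3 + (1)*(p 0%nat)^3*a^2*b) / (1 + a*((p 0%nat)^2+(p 1%nat)^2))^3)
  | 1, 2, 0, 1 => (((-1/4)*(p 1%nat)*b^3 + (1)*(p 1%nat)*a*b + (1/4)*(p 1%nat)^3*a*b^3 + (-1)*(p 1%nat)^3*a^2*b + (-3/4)*(p 0%nat)^2*(p 1%nat)*a*b^3 + (3)*(p 0%nat)^2*(p 1%nat)*a^2*b) / (1 + a*((p 0%nat)^2+(p 1%nat)^2))^3)
  | 1, 2, 0, 2 => (((1/2)*(p 0%nat)*(p 1%nat)*a*b^2) / (1 + a*((p 0%nat)^2+(p 1%nat)^2))^2)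
  | 1, 2, 1, 0 => (((-1/4)*(p 1%nat)*b^3 + (1)*(p 1%nat)*a*b + (1/4)*(p 1%nat)^3*a*b^3 + (-1)*(p 1%nat)^3*a^2*b + (-3/4)*(p 0%nat)^2*(p 1%nat)*a*b^3 + (3)*(p 0%nat)^2*(p 1%nat)*a^2*b) / (1 + a*((p 0%nat)^2+(p 1%nat)^2))^3)
  | 1, 2, 1, 1 => (((1/4)*(p 0%nat)*b^3 + (-1)*(p 0%nat)*a*b + (-3/4)*(p 0%nat)*(p 1%nat)^2*a*b^3 + (3)*(p 0%nat)*(p 1%nat)^2*a^2*b + (1/4)*(p 0%nat)^3*a*b^3 + (-1)*(p 0%nat)^3*a^2*b) / (1 + a*((p 0%nat)^2+(p 1%nat)^2))^3)
  | 1, 2, 1, 2 => (((-1/4)*b^2 + (1/4)*(p 1%nat)^2*a*b^2 + (-1/4)*(p 0%nat)^2*a*b^2) / (1 + a*((p 0%nat)^2+(p 1%nat)^2))^2)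
  | 1, 2, 2, 0 => (((1/2)*(p 0%nat)*(p 1%nat)*a*b^2) / (1 + a*((p 0%nat)^2+(p 1%nat)^2))^2)
  | 1, 2, 2, 1 => (((-1/4)*b^2 + (1/4)*(p 1%nat)^2*a*b^2 + (-1/4)*(p 0%nat)^2*a*b^2) / (1 + a*((p 0%nat)^2+(p 1%nat)^2))^2)
  | 1, 2, 2, 2 => 0
  | 2, 0, 0, 0 => 0
  | 2, 0, 0, 1 => 0
  | 2, 0, 0, 2 => 0
  | 2, 0, 1, 0 => 0
  | 2, 0, 1, 1 => 0
  | 2, 0, 1, 2 => 0
  | 2, 0, 2, 0 => 0
  | 2, 0, 2, 1 => 0
  | 2, 0, 2, 2 => 0
  | 2, 1, 0, 0 => 0
  | 2, 1, 0, 1 => 0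
  | 2, 1, 0, 2 => 0
  | 2, 1, 1, 0 => 0
  | 2, 1, 1, 1 => 0
  | 2, 1, 1, 2 => 0
  | 2, 1, 2, 0 => 0
  | 2, 1, 2, 1 => 0
  | 2, 1, 2, 2 => 0
  | 2, 2, 0, 0 => 0
  | 2, 2, 0, 1 => 0
  | 2, 2, 0, 2 => 0
  | 2, 2, 1, 0 => 0
  | 2, 2, 1, 1 => 0
  | 2, 2, 1, 2 => 0
  | 2, 2, 2, 0 => 0
  | 2, 2, 2, 1 => 0
  | 2, 2, 2, 2 => 0
  | _, _, _, _ => 0
  end.

Lemma pd_gmet a b p m i j : (m < 3)%nat -> (i < 3)%nat -> (j < 3)%nat -> lam a p <> 0 ->
  pd m (fun q => gmet a b q i j) p = DG a b m i j p.
Proof.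
intros Hm Hi Hj H. unfold lam in H. unfold pd. apply is_derive_unique.
destruct m as [|[|[|m]]]; try lia; destruct i as [|[|[|i]]]; try lia;
destruct j as [|[|[|j]]]; try lia;
unfold gmet, theta, kdelta2, lam, DG; cbn [upd Nat.eqb andb Nat.ltb Nat.leb];
auto_derive; sides H; field; sides H.
Qed.

Lemma det_gmet a b p : lam a p <> 0 -> det3 (gmet a b p) = 1 / (lam a p)^4.
Proof.
intros H. unfold det3, cof3, sum3, gmet, theta, kdelta2; cbn -[lam]. field. sides H.
Qed.

Lemma ginv_eq a b p l m : (l < 3)%nat -> (m < 3)%nat -> lam a p <> 0 ->
  ginv a b p l m = GI a b l m p.
Proof.
intros Hl Hm H. unfold ginv. rewrite det_gmet by exact H. unfold lam in H.
destruct l as [|[|[|l]]]; try lia; destruct m as [|[|[|m]]]; try lia;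
unfold cof3, gmet, theta, kdelta2, lam, GI; cbn -[pow]; field; sides H.
Qed.

Lemma Gam_eq a b p l i j : (l < 3)%nat -> (i < 3)%nat -> (j < 3)%nat -> lam a p <> 0 ->
  Gam a b l i j p = GE a b l i j p.
Proof.
intros Hl Hi Hj H. unfold Gam, sum3.
rewrite !pd_gmet by (first [lia | exact H]).
rewrite !ginv_eq by (first [lia | exact H]).
unfold lam in H.
destruct l as [|[|[|l]]]; try lia; destruct i as [|[|[|i]]]; try lia;
destruct j as [|[|[|j]]]; try lia;
unfold GI, DG, GE; field; sides H.
Qed.

Lemma locally_nz (f : R -> R) x : continuous f x -> f x <> 0 -> locally x (fun h => f h <> 0).
Proof.
intros Hc Hn. apply (Hc (fun z => z <> 0)).
assert (He : 0 < Rabs (f x)) by (apply Rabs_pos_lt; exact Hn).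
exists (mkposreal _ He). intros z Hz Hz0. subst z.
unfold ball in Hz; simpl in Hz; unfold AbsRing_ball, abs, minus, plus, opp in Hz; simpl in Hz.
rewrite Rplus_0_l, Rabs_Ropp in Hz. lra.
Qed.

Lemma locally_lam a p m : (m < 3)%nat -> lam a p <> 0 ->
  locally (p m) (fun h => lam a (upd p m h) <> 0).
Proof.
intros Hm H.
destruct m as [|[|[|m]]]; try lia.
- assert (C : continuous (fun h => lam a (upd p 0 h)) (p 0%nat)).
  { apply (ex_derive_continuous (V := R_NormedModule)). unfold lam; cbn [upd Nat.eqb]. auto_derive. exact I. }
  assert (N : (fun h => lam a (upd p 0 h)) (p 0%nat) <> 0).
  { unfold lam in *; cbn [upd Nat.eqb]. exact H. }
  exact (locally_nz _ _ C N).
- assert (C : continuous (fun h => lam a (upd p 1 h)) (p 1%nat)).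
  { apply (ex_derive_continuous (V := R_NormedModule)). unfold lam; cbn [upd Nat.eqb]. auto_derive. exact I. }
  assert (N : (fun h => lam a (upd p 1 h)) (p 1%nat) <> 0).
  { unfold lam in *; cbn [upd Nat.eqb]. exact H. }
  exact (locally_nz _ _ C N).
- apply filter_forall. intros h. unfold lam in *; cbn [upd Nat.eqb]. exact H.
Qed.

Lemma pd_Gam a b p m l i j : (m < 3)%nat -> (l < 3)%nat -> (i < 3)%nat -> (j < 3)%nat ->
  lam a p <> 0 -> pd m (Gam a b l i j) p = DGE a b m l i j p.
Proof.
intros Hm Hl Hi Hj H. unfold pd.
rewrite (Derive_ext_loc _ (fun h => GE a b l i j (upd p m h))).
2:{ apply (filter_imp (fun h => lam a (upd p m h) <> 0)).
    - intros h Hh. apply Gam_eq; assumption.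
    - apply locally_lam; assumption. }
apply is_derive_unique. unfold lam in H.
destruct m as [|[|[|m]]]; try lia; destruct l as [|[|[|l]]]; try lia;
destruct i as [|[|[|i]]]; try lia; destruct j as [|[|[|j]]]; try lia;
unfold GE, DGE; cbn [upd Nat.eqb];
auto_derive; sides H; field; sides H.
Qed.

Definition cA (a b : R) := 4 * a - 3 / 4 * b ^ 2.
Definition cB (a b : R) := 4 * a - b ^ 2.

Definition F4 (a b : R) (p : vec) (i j k m : nat) : R :=
  let g := gmet a b p in
  cA a b * (g j k * g i m - g i k * g j m)
  - cB a b * (g j 2%nat * g k 2%nat * g i m - g i 2%nat * g k 2%nat * g j m
              + g i 2%nat * g j k * g m 2%nat - g j 2%nat * g i k * g m 2%nat).

Lemma R4c a b p i j k m : (i < 3)%nat -> (j < 3)%nat -> (k < 3)%nat -> (m < 3)%nat ->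
  lam a p <> 0 ->
  sum3 (fun l => gmet a b p l m * Rm a b l i j k p) = F4 a b p i j k m.
Proof.
intros Hi Hj Hk Hm H. unfold sum3, Rm, sum3.
rewrite !pd_Gam by (first [lia | exact H]).
rewrite !Gam_eq by (first [lia | exact H]).
unfold lam in H. unfold F4, cA, cB.
destruct i as [|[|[|i]]]; try lia; destruct j as [|[|[|j]]]; try lia;
destruct k as [|[|[|k]]]; try lia; destruct m as [|[|[|m]]]; try lia;
unfold GE, DGE, gmet, theta, kdelta2, lam; cbn [Nat.eqb andb Nat.ltb Nat.leb];
field; sides H.
Qed.

Definition eta (a b : R) (p X : vec) : R := ginner a b p X E3.
Definition Fg (a b : R) (p X Y Z W : vec) : R :=
  let gi := ginner a b p in
  cA a b * (gi Y Z * gi X W - gi X Z * gi Y W)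
  - cB a b * (eta a b p Y * eta a b p Z * gi X W - eta a b p X * eta a b p Z * gi Y W
              + eta a b p X * gi Y Z * eta a b p W - eta a b p Y * gi X Z * eta a b p W).

Lemma sum3_ext (f g : nat -> R) : (forall i, (i < 3)%nat -> f i = g i) -> sum3 f = sum3 g.
Proof. intros H. unfold sum3. rewrite !H by lia. reflexivity. Qed.

Lemma R4gen a b p X Y Z W : lam a p <> 0 ->
  ginner a b p (Rcurv a b p X Y Z) W = Fg a b p X Y Z W.
Proof.
intros H.
transitivity (sum3 (fun i => sum3 (fun j => sum3 (fun k => sum3 (fun m =>
   X i * Y j * Z k * W m * sum3 (fun l => gmet a b p l m * Rm a b l i j k p)))))).
{ unfold ginner, Rcurv, sum3. ring. }
transitivity (sum3 (fun i => sum3 (fun j => sum3 (fun k => sum3 (fun m =>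
   X i * Y j * Z k * W m * F4 a b p i j k m))))).
{ apply sum3_ext; intros i Hi; apply sum3_ext; intros j Hj; apply sum3_ext; intros k Hk;
  apply sum3_ext; intros m Hm. rewrite R4c by assumption. reflexivity. }
unfold Fg, F4, eta, ginner, E3, sum3; cbn [Nat.eqb]. ring.
Qed.

Definition eq3 (X Y : vec) : Prop := forall l, (l < 3)%nat -> X l = Y l.
Definition vlin (c : R) (X : vec) (d : R) (Y : vec) : vec := fun l => c * X l + d * Y l.

Lemma ginner_ext a b p X X' Y Y' : eq3 X X' -> eq3 Y Y' -> ginner a b p X Y = ginner a b p X' Y'.
Proof. intros H1 H2. unfold ginner, sum3. rewrite !H1, !H2 by lia. reflexivity. Qed.

Lemma ginner_sym a b p X Y : ginner a b p X Y = ginner a b p Y X.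
Proof. unfold ginner, sum3, gmet, kdelta2; cbn [Nat.eqb andb Nat.ltb Nat.leb]. ring. Qed.

Lemma ginner_vlin_l a b p c X d Y W :
  ginner a b p (vlin c X d Y) W = c * ginner a b p X W + d * ginner a b p Y W.
Proof. unfold ginner, vlin, sum3. ring. Qed.

Lemma ginner_vlin_r a b p c X d Y W :
  ginner a b p W (vlin c X d Y) = c * ginner a b p W X + d * ginner a b p W Y.
Proof. unfold ginner, vlin, sum3. ring. Qed.

Definition al0 (a : R) (p X : vec) := X 0%nat / lam a p.
Definition al1 (a : R) (p X : vec) := X 1%nat / lam a p.

Lemma eta_eq a b p X : eta a b p X = b / 2 * p 1%nat / lam a p * X 0%nat
   - b / 2 * p 0%nat / lam a p * X 1%nat + X 2%nat.
Proof. unfold eta, ginner, sum3, E3, gmet, kdelta2, theta; cbn [Nat.eqb andb Nat.ltb Nat.leb].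
unfold Rdiv. ring. Qed.

Lemma ginner_al a b p X Y : lam a p <> 0 ->
  ginner a b p X Y = al0 a p X * al0 a p Y + al1 a p X * al1 a p Y + eta a b p X * eta a b p Y.
Proof. intros H. rewrite !eta_eq. unfold al0, al1, ginner, sum3, gmet, kdelta2, theta;
cbn [Nat.eqb andb Nat.ltb Nat.leb]. field. exact H. Qed.

Lemma ortho3 (u0 u1 u2 v0 v1 v2 w0 w1 w2 : R) :
  u0*u0+u1*u1+u2*u2 = 1 -> v0*v0+v1*v1+v2*v2 = 1 -> w0*w0+w1*w1+w2*w2 = 1 ->
  u0*v0+u1*v1+u2*v2 = 0 -> u0*w0+u1*w1+u2*w2 = 0 -> v0*w0+v1*w1+v2*w2 = 0 ->
  u2*u2+v2*v2+w2*w2 = 1 /\ (u0*w1 - u1*w0)^2 = v2^2 /\ (u0*v1-u1*v0)^2 = w2^2.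
Proof.
intros Huu Hvv Hww Huv Huw Hvw.
set (d := u0*(v1*w2-v2*w1) - u1*(v0*w2-v2*w0) + u2*(v0*w1-v1*w0)).
assert (Hd : d^2 = 1).
{ assert (E : (u0*u0+u1*u1+u2*u2)*((v0*v0+v1*v1+v2*v2)*(w0*w0+w1*w1+w2*w2) - (v0*w0+v1*w1+v2*w2)^2)
   - (u0*v0+u1*v1+u2*v2)*((u0*v0+u1*v1+u2*v2)*(w0*w0+w1*w1+w2*w2) - (v0*w0+v1*w1+v2*w2)*(u0*w0+u1*w1+u2*w2))
   + (u0*w0+u1*w1+u2*w2)*((u0*v0+u1*v1+u2*v2)*(v0*w0+v1*w1+v2*w2) - (v0*v0+v1*v1+v2*v2)*(u0*w0+u1*w1+u2*w2)) = d^2)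
   by (unfold d; ring).
  rewrite Huu, Hvv, Hww, Huv, Huw, Hvw in E. rewrite <- E. ring. }
(* Cramer: d*c = (c.u)(v x w) + (c.v)(w x u) + (c.w)(u x v) *)
assert (Cw2 : d * w2 = (w0*u0+w1*u1+w2*u2)*(v0*w1-v1*w0) + (w0*v0+w1*v1+w2*v2)*(w0*u1-w1*u0)
                      + (w0*w0+w1*w1+w2*w2)*(u0*v1-u1*v0)) by (unfold d; ring).
assert (Cv2 : d * v2 = (v0*u0+v1*u1+v2*u2)*(v0*w1-v1*w0) + (v0*v0+v1*v1+v2*v2)*(w0*u1-w1*u0)
                      + (v0*w0+v1*w1+v2*w2)*(u0*v1-u1*v0)) by (unfold d; ring).
assert (Cu2 : d * u2 = (u0*u0+u1*u1+u2*u2)*(v0*w1-v1*w0) + (u0*v0+u1*v1+u2*v2)*(w0*u1-w1*u0)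
                      + (u0*w0+u1*w1+u2*w2)*(u0*v1-u1*v0)) by (unfold d; ring).
assert (Ce : d * 1 = u2*(v0*w1-v1*w0) + v2*(w0*u1-w1*u0) + w2*(u0*v1-u1*v0)) by (unfold d; ring).
replace (w0*u0+w1*u1+w2*u2) with 0 in Cw2 by lra.
replace (w0*v0+w1*v1+w2*v2) with 0 in Cw2 by lra.
rewrite Hww in Cw2.
replace (v0*u0+v1*u1+v2*u2) with 0 in Cv2 by lra.
rewrite Hvv, Hvw in Cv2.
rewrite Huu, Huv, Huw in Cu2.
split; [|split].
- assert (d * (u2*u2+v2*v2+w2*w2) = d).
  { transitivity (u2*(d*u2) + v2*(d*v2) + w2*(d*w2)); [ring|]. rewrite Cu2, Cv2, Cw2. unfold d; ring. }
  assert (d <> 0) by (intro Hz; rewrite Hz in Hd; lra).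
  apply (Rmult_eq_reg_l d); [lra|assumption].
- assert (u0*w1 - u1*w0 = - (d * v2)) by (rewrite Cv2; ring).
  rewrite H. replace ((- (d*v2))^2) with (d^2 * v2^2) by ring. rewrite Hd. ring.
- assert (u0*v1 - u1*v0 = d * w2) by (rewrite Cw2; ring).
  rewrite H. replace ((d*w2)^2) with (d^2 * w2^2) by ring. rewrite Hd. ring.
Qed.

Definition Om (a b : R) (p X Y : vec) : R :=
  - (b / (2 * (lam a p)^2)) * (X 0%nat * Y 1%nat - X 1%nat * Y 0%nat).

Lemma aux_deriv a b (g0 g1 v0 v1 v2 : R -> R) s :
  1 + a * (g0 s ^ 2 + g1 s ^ 2) <> 0 ->
  ex_derive g0 s -> ex_derive g1 s -> ex_derive v0 s -> ex_derive v1 s -> ex_derive v2 s ->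
  is_derive (fun t => b / 2 * g1 t / (1 + a * (g0 t ^ 2 + g1 t ^ 2)) * v0 t
                    - b / 2 * g0 t / (1 + a * (g0 t ^ 2 + g1 t ^ 2)) * v1 t + v2 t) s
   (let L := 1 + a * (g0 s ^ 2 + g1 s ^ 2) in
    let L' := 2 * a * (g0 s * Derive g0 s + g1 s * Derive g1 s) in
    b / 2 * (Derive g1 s * v0 s + g1 s * Derive v0 s) / L - b / 2 * g1 s * v0 s * L' / L ^ 2
    - b / 2 * (Derive g0 s * v1 s + g0 s * Derive v1 s) / L + b / 2 * g0 s * v1 s * L' / L ^ 2
    + Derive v2 s).
Proof.
intros H D0 D1 E0 E1 E2. auto_derive.
- repeat split; auto; nzL H.
- cbv zeta. change (fun x => g0 x) with g0. change (fun x => g1 x) with g1.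
  change (fun x => v0 x) with v0. change (fun x => v1 x) with v1. change (fun x => v2 x) with v2.
  field. nzL H.
Qed.

Lemma eta_deriv a b c V s :
  lam a (c s) <> 0 ->
  ex_derive (fun t => c t 0%nat) s -> ex_derive (fun t => c t 1%nat) s ->
  (forall l, (l<3)%nat -> ex_derive (fun t => V t l) s) ->
  is_derive (fun t => eta a b (c t) (V t)) s
     (eta a b (c s) (covd a b c V s) + Om a b (c s) (vel c s) (V s)).
Proof.
intros H H0 H1 HV.
apply (is_derive_ext (fun t => b / 2 * (fun u => c u 1%nat) t / (1 + a * ((fun u => c u 0%nat) t ^ 2 + (fun u => c u 1%nat) t ^ 2)) * (fun u => V u 0%nat) t
   - b / 2 * (fun u => c u 0%nat) t / (1 + a * ((fun u => c u 0%nat) t ^ 2 + (fun u => c u 1%nat) t ^ 2)) * (fun u => V u 1%nat) t + (fun u => V u 2%nat) t)).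
{ intros t. rewrite eta_eq. reflexivity. }
pose proof (HV 0%nat ltac:(lia)) as V0. pose proof (HV 1%nat ltac:(lia)) as V1.
pose proof (HV 2%nat ltac:(lia)) as V2.
pose proof (aux_deriv a b (fun u => c u 0%nat) (fun u => c u 1%nat) (fun u => V u 0%nat) (fun u => V u 1%nat) (fun u => V u 2%nat) s) as D.
cbv beta in D.
replace (eta a b (c s) (covd a b c V s) + Om a b (c s) (vel c s) (V s)) with
   (let L := 1 + a * (c s 0%nat ^ 2 + c s 1%nat ^ 2) in
    let L' := 2 * a * (c s 0%nat * Derive (fun u => c u 0%nat) s + c s 1%nat * Derive (fun u => c u 1%nat) s) in
    b / 2 * (Derive (fun u => c u 1%nat) s * V s 0%nat + c s 1%nat * Derive (fun u => V u 0%nat) s) / L - b / 2 * c s 1%nat * V s 0%nat * L' / L ^ 2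
    - b / 2 * (Derive (fun u => c u 0%nat) s * V s 1%nat + c s 0%nat * Derive (fun u => V u 1%nat) s) / L + b / 2 * c s 0%nat * V s 1%nat * L' / L ^ 2
    + Derive (fun u => V u 2%nat) s).
- apply D; auto.
- rewrite eta_eq. unfold covd, sum3, Om, vel.
  rewrite !Gam_eq by (first [lia | exact H]).
  unfold lam in *. unfold GE. cbv zeta. field. nzL H.
Qed.

Lemma inI_open lo hi s : inI lo hi s -> locally s (inI lo hi).
Proof.
intros H. apply (open_and _ _ (open_Rbar_gt lo) (open_Rbar_lt hi)). exact H.
Qed.

Lemma covd_comb a b c V X Y al be s :
  locally s (fun t => eq3 (V t) (vlin al (X t) be (Y t))) ->
  (forall l, (l<3)%nat -> ex_derive (fun t => X t l) s) ->
  (forall l, (l<3)%nat -> ex_derive (fun t => Y t l) s) ->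
  eq3 (covd a b c V s) (vlin al (covd a b c X s) be (covd a b c Y s)).
Proof.
intros HL HX HY l Hl. unfold covd, vlin.
rewrite (Derive_ext_loc _ (fun t => al * X t l + be * Y t l)).
2:{ apply (filter_imp (fun t => eq3 (V t) (vlin al (X t) be (Y t)))); [|exact HL].
    intros t Ht. rewrite (Ht l Hl). reflexivity. }
rewrite Derive_plus.
2:{ apply ex_derive_scal. apply HX; exact Hl. }
2:{ apply ex_derive_scal. apply HY; exact Hl. }
rewrite !Derive_scal.
pose proof (locally_singleton _ _ HL) as Hs. unfold eq3, vlin in Hs.
unfold sum3. rewrite !(Hs 0%nat), !(Hs 1%nat), !(Hs 2%nat) by lia. ring.
Qed.

Lemma vel_der a lo hi g s l : curve_in_M a lo hi g -> inI lo hi s -> (l < 3)%nat ->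
  ex_derive (fun t => vel g t l) s.
Proof.
intros [_ [Hs _]] HI Hl. exact (Hs l Hl 1%nat s HI).
Qed.

Lemma pos_der a lo hi g s l : curve_in_M a lo hi g -> inI lo hi s -> (l < 3)%nat ->
  ex_derive (fun t => g t l) s.
Proof.
intros [_ [Hs _]] HI Hl. exact (Hs l Hl 0%nat s HI).
Qed.

Definition FrameH (a b : R) (lo hi : Rbar) (g : R -> vec) (k t : R) (N B : R -> vec) : Prop :=
  (forall i, (i < 3)%nat -> forall s, inI lo hi s ->
        ex_derive (fun u => N u i) s /\ ex_derive (fun u => B u i) s) /\
  (forall s, inI lo hi s ->
       let T := vel g s in
       ginner a b (g s) T T = 1 /\ ginner a b (g s) (N s) (N s) = 1 /\
       ginner a b (g s) (B s) (B s) = 1 /\ ginner a b (g s) T (N s) = 0 /\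
       ginner a b (g s) T (B s) = 0 /\ ginner a b (g s) (N s) (B s) = 0 /\
       (forall l, (l < 3)%nat ->
          covT a b g 1 s l = k * N s l /\
          covd a b g N s l = - k * T l + t * B s l /\
          covd a b g B s l = - t * N s l)).

Lemma covT_chain a b lo hi g k t N B :
  curve_in_M a lo hi g -> FrameH a b lo hi g k t N B ->
  forall s, inI lo hi s ->
   eq3 (covT a b g 2 s) (vlin (-k^2) (vel g s) (k*t) (B s)) /\
   eq3 (covT a b g 3 s) (vlin (-k*(k^2+t^2)) (N s) 0 (N s)) /\
   eq3 (covT a b g 4 s) (vlin (k^2*(k^2+t^2)) (vel g s) (-k*t*(k^2+t^2)) (B s)) /\
   eq3 (covT a b g 5 s) (vlin (k*(k^2+t^2)^2) (N s) 0 (N s)).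
Proof.
intros HC [HD HF].
assert (DN : forall s, inI lo hi s -> forall l, (l<3)%nat -> ex_derive (fun u => N u l) s)
  by (intros s Hs l Hl; apply (HD l Hl s Hs)).
assert (DB : forall s, inI lo hi s -> forall l, (l<3)%nat -> ex_derive (fun u => B u l) s)
  by (intros s Hs l Hl; apply (HD l Hl s Hs)).
assert (DT : forall s, inI lo hi s -> forall l, (l<3)%nat -> ex_derive (fun u => vel g u l) s)
  by (intros s Hs l Hl; apply (vel_der a lo hi); assumption).
assert (C2 : forall s, inI lo hi s -> eq3 (covT a b g 2 s) (vlin (-k^2) (vel g s) (k*t) (B s))).
{ intros s Hs. simpl covT at 1.
  intros l Hl. rewrite (covd_comb a b g (covT a b g 1) N N k 0 s).
  - unfold vlin. destruct (HF s Hs) as (_&_&_&_&_&_&H). destruct (H l Hl) as (_&H2&_).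
    rewrite H2. ring.
  - apply (filter_imp (inI lo hi)); [|apply inI_open; exact Hs].
    intros u Hu m Hm. unfold vlin. destruct (HF u Hu) as (_&_&_&_&_&_&H). destruct (H m Hm) as (H1&_&_).
    rewrite H1. ring.
  - apply DN; exact Hs.
  - apply DN; exact Hs.
  - exact Hl. }
assert (C3 : forall s, inI lo hi s -> eq3 (covT a b g 3 s) (vlin (-k*(k^2+t^2)) (N s) 0 (N s))).
{ intros s Hs. change (covT a b g 3) with (covd a b g (covT a b g 2)).
  intros l Hl. rewrite (covd_comb a b g (covT a b g 2) (vel g) B (-k^2) (k*t) s).
  - unfold vlin. destruct (HF s Hs) as (_&_&_&_&_&_&H). destruct (H l Hl) as (H1&_&H3).
    change (covd a b g (vel g) s l) with (covT a b g 1 s l).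
    rewrite H1, H3. ring.
  - apply (filter_imp (inI lo hi)); [|apply inI_open; exact Hs].
    intros u Hu. apply C2; exact Hu.
  - apply DT; exact Hs.
  - apply DB; exact Hs.
  - exact Hl. }
assert (C4 : forall s, inI lo hi s -> eq3 (covT a b g 4 s) (vlin (k^2*(k^2+t^2)) (vel g s) (-k*t*(k^2+t^2)) (B s))).
{ intros s Hs. change (covT a b g 4) with (covd a b g (covT a b g 3)).
  intros l Hl. rewrite (covd_comb a b g (covT a b g 3) N N (-k*(k^2+t^2)) 0 s).
  - unfold vlin. destruct (HF s Hs) as (_&_&_&_&_&_&H). destruct (H l Hl) as (_&H2&_).
    rewrite H2. ring.
  - apply (filter_imp (inI lo hi)); [|apply inI_open; exact Hs].
    intros u Hu. apply C3; exact Hu.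
  - apply DN; exact Hs.
  - apply DN; exact Hs.
  - exact Hl. }
intros s Hs. split; [apply C2; exact Hs|]. split; [apply C3; exact Hs|]. split; [apply C4; exact Hs|].
change (covT a b g 5) with (covd a b g (covT a b g 4)).
intros l Hl. rewrite (covd_comb a b g (covT a b g 4) (vel g) B (k^2*(k^2+t^2)) (-k*t*(k^2+t^2)) s).
- unfold vlin. destruct (HF s Hs) as (_&_&_&_&_&_&H). destruct (H l Hl) as (H1&_&H3).
  change (covd a b g (vel g) s l) with (covT a b g 1 s l).
  rewrite H1, H3. ring.
- apply (filter_imp (inI lo hi)); [|apply inI_open; exact Hs].
  intros u Hu. apply C4; exact Hu.
- apply DT; exact Hs.
- apply DB; exact Hs.
- exact Hl.
Qed.

Lemma Fg_ext a b p X X' Y Y' Z Z' W W' :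
  eq3 X X' -> eq3 Y Y' -> eq3 Z Z' -> eq3 W W' -> Fg a b p X Y Z W = Fg a b p X' Y' Z' W'.
Proof.
intros H1 H2 H3 H4. unfold Fg, eta.
assert (E : eq3 E3 E3) by (intros l _; reflexivity).
rewrite (ginner_ext a b p X X' W W'), (ginner_ext a b p Y Y' Z Z'), (ginner_ext a b p X X' Z Z'),
  (ginner_ext a b p Y Y' W W'), (ginner_ext a b p X X' E3 E3), (ginner_ext a b p Y Y' E3 E3),
  (ginner_ext a b p Z Z' E3 E3), (ginner_ext a b p W W' E3 E3) by assumption.
reflexivity.
Qed.

Lemma eq3_refl X : eq3 X X.
Proof. intros l _; reflexivity. Qed.

Lemma Om_al a b p X Y : lam a p <> 0 ->
  Om a b p X Y = - (b / 2) * (al0 a p X * al1 a p Y - al1 a p X * al0 a p Y).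
Proof. intros H. unfold Om, al0, al1. field. exact H. Qed.

Lemma pointwise a b lo hi g k t N B :
  curve_in_M a lo hi g -> triharmonic a b lo hi g -> FrameH a b lo hi g k t N B ->
  forall s, inI lo hi s ->
  let p := g s in let T := vel g s in
  let nu := eta a b p T in let nuN := eta a b p (N s) in let nuB := eta a b p (B s) in
  nu^2 + nuN^2 + nuB^2 = 1 /\
  k * cB a b * nuN * ((2*k^2+t^2) * nuB + k * t * nu) = 0 /\
  k * ((k^2+t^2)^2 - (2*k^2+t^2) * (cA a b - cB a b * (nu^2 + nuN^2)) - k * t * cB a b * nu * nuB) = 0 /\
  (Om a b p T (B s))^2 = b^2/4 * nuN^2 /\
  (Om a b p T (N s))^2 = b^2/4 * nuB^2.
Proof.
intros HC HT HF s Hs. cbv zeta.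
pose proof (covT_chain a b lo hi g k t N B HC HF s Hs) as (C2&C3&C4&C5).
destruct HF as [HD HF'].
destruct (HF' s Hs) as (gTT&gNN&gBB&gTN&gTB&gNB&HH). cbv zeta in *.
set (p := g s) in *. set (T := vel g s) in *.
assert (HL : lam a p <> 0) by (destruct HC as (_&_&HM); specialize (HM s Hs); unfold inM in HM; unfold p; lra).
assert (C1 : eq3 (covT a b g 1 s) (vlin k (N s) 0 (N s))).
{ intros l Hl. unfold vlin. destruct (HH l Hl) as (H1&_&_). rewrite H1. ring. }
assert (TW : forall W, ginner a b p (covT a b g 5 s) W + ginner a b p (Rcurv a b p (covT a b g 3 s) T T) W
                       - ginner a b p (Rcurv a b p (covT a b g 2 s) (covT a b g 1 s) T) W = 0).
{ intros W. transitivity (ginner a b p (fun l => covT a b g 5 s l + Rcurv a b p (covT a b g 3 s) T T l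
     - Rcurv a b p (covT a b g 2 s) (covT a b g 1 s) T l) W).
  { unfold ginner, sum3. ring. }
  rewrite (ginner_ext a b p _ (fun _ => 0) W W).
  - unfold ginner, sum3. ring.
  - intros l Hl. apply (HT s Hs l Hl).
  - apply eq3_refl. }
assert (gNT : ginner a b p (N s) T = 0) by (rewrite ginner_sym; exact gTN).
assert (gBT : ginner a b p (B s) T = 0) by (rewrite ginner_sym; exact gTB).
assert (gBN : ginner a b p (B s) (N s) = 0) by (rewrite ginner_sym; exact gNB).
assert (Red : forall W, eq3 W W ->
   ginner a b p (covT a b g 5 s) W + ginner a b p (Rcurv a b p (covT a b g 3 s) T T) W
   - ginner a b p (Rcurv a b p (covT a b g 2 s) (covT a b g 1 s) T) W =
   ginner a b p (vlin (k*(k^2+t^2)^2) (N s) 0 (N s)) W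
   + Fg a b p (vlin (-k*(k^2+t^2)) (N s) 0 (N s)) T T W
   - Fg a b p (vlin (-k^2) T (k*t) (B s)) (vlin k (N s) 0 (N s)) T W).
{ intros W _. rewrite !R4gen by exact HL.
  rewrite (ginner_ext a b p _ _ W W C5 (eq3_refl W)).
  rewrite (Fg_ext a b p _ _ T T T T W W C3 (eq3_refl _) (eq3_refl _) (eq3_refl _)).
  rewrite (Fg_ext a b p _ _ _ _ T T W W C2 C1 (eq3_refl _) (eq3_refl _)).
  reflexivity. }
assert (EB := TW (B s)). rewrite (Red _ (eq3_refl _)) in EB.
assert (EN := TW (N s)). rewrite (Red _ (eq3_refl _)) in EN.
unfold Fg, eta in EB, EN.
rewrite ?ginner_vlin_l, ?ginner_vlin_r in EB, EN.
repeat (rewrite gTT in EB || rewrite gNN in EB || rewrite gBB in EB || rewrite gTN in EB || rewrite gTB in EB || rewrite gNB in EB || rewrite gNT in EB || rewrite gBT in EB || rewrite gBN in EB).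
repeat (rewrite gTT in EN || rewrite gNN in EN || rewrite gBB in EN || rewrite gTN in EN || rewrite gTB in EN || rewrite gNB in EN || rewrite gNT in EN || rewrite gBT in EN || rewrite gBN in EN).
rewrite (ginner_al a b p) in gTT, gNN, gBB, gTN, gTB, gNB by exact HL.
pose proof (ortho3 _ _ _ _ _ _ _ _ _ gTT gNN gBB gTN gTB gNB) as (P1&P2&P3).
unfold eta.
split; [|split; [|split; [|split]]].
- unfold eta in P1. nra.
- match type of EB with ?e = 0 => replace (k * cB a b * ginner a b p (N s) E3 * ((2*k^2+t^2) * ginner a b p (B s) E3 + k * t * ginner a b p T E3)) with e by ring end.
  exact EB.
- match type of EN with ?e = 0 => replace (k * ((k^2+t^2)^2 - (2*k^2+t^2) * (cA a b - cB a b * ((ginner a b p T E3)^2 + (ginner a b p (N s) E3)^2)) - k * t * cB a b * ginner a b p T E3 * ginner a b p (B s) E3)) with e by ring end.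
  exact EN.
- rewrite Om_al by exact HL. unfold eta in P2. rewrite <- P2. field.
- rewrite Om_al by exact HL. unfold eta in P3. rewrite <- P3. field.
Qed.

Lemma Om_self a b p X : Om a b p X X = 0.
Proof. unfold Om. ring. Qed.

Lemma lam_nz a lo hi g s : curve_in_M a lo hi g -> inI lo hi s -> lam a (g s) <> 0.
Proof. intros (_&_&HM) Hs. specialize (HM s Hs). unfold inM in HM. lra. Qed.

Lemma derivs a b lo hi g k t N B :
  curve_in_M a lo hi g -> FrameH a b lo hi g k t N B ->
  forall s, inI lo hi s ->
  is_derive (fun u => eta a b (g u) (vel g u)) s (k * eta a b (g s) (N s)) /\
  is_derive (fun u => eta a b (g u) (N u)) s
     (- k * eta a b (g s) (vel g s) + t * eta a b (g s) (B s) + Om a b (g s) (vel g s) (N s)) /\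
  is_derive (fun u => eta a b (g u) (B u)) s
     (- t * eta a b (g s) (N s) + Om a b (g s) (vel g s) (B s)).
Proof.
intros HC HF s Hs.
pose proof (lam_nz a lo hi g s HC Hs) as HL.
assert (D0 := pos_der a lo hi g s 0%nat HC Hs ltac:(lia)).
assert (D1 := pos_der a lo hi g s 1%nat HC Hs ltac:(lia)).
destruct HF as [HD HF'].
destruct (HF' s Hs) as (_&_&_&_&_&_&HH).
split; [|split].
- replace (k * eta a b (g s) (N s)) with
    (eta a b (g s) (covd a b g (vel g) s) + Om a b (g s) (vel g s) (vel g s)).
  + apply eta_deriv; auto. intros l Hl. apply (vel_der a lo hi); auto.
  + rewrite Om_self. unfold eta.
    rewrite (ginner_ext a b (g s) _ (vlin k (N s) 0 (N s)) E3 E3).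
    * rewrite ginner_vlin_l. ring.
    * intros l Hl. unfold vlin. destruct (HH l Hl) as (H1&_&_).
      change (covd a b g (vel g) s l) with (covT a b g 1 s l). rewrite H1. ring.
    * intros l _. reflexivity.
- replace (- k * eta a b (g s) (vel g s) + t * eta a b (g s) (B s) + Om a b (g s) (vel g s) (N s)) with
    (eta a b (g s) (covd a b g N s) + Om a b (g s) (vel g s) (N s)).
  + apply eta_deriv; auto. intros l Hl. apply (HD l Hl s Hs).
  + unfold eta.
    rewrite (ginner_ext a b (g s) _ (vlin (-k) (vel g s) t (B s)) E3 E3).
    * rewrite ginner_vlin_l. ring.
    * intros l Hl. unfold vlin. destruct (HH l Hl) as (_&H2&_). rewrite H2. ring.
    * intros l _. reflexivity.
- replace (- t * eta a b (g s) (N s) + Om a b (g s) (vel g s) (B s)) with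
    (eta a b (g s) (covd a b g B s) + Om a b (g s) (vel g s) (B s)).
  + apply eta_deriv; auto. intros l Hl. apply (HD l Hl s Hs).
  + unfold eta.
    rewrite (ginner_ext a b (g s) _ (vlin (-t) (N s) 0 (N s)) E3 E3).
    * rewrite ginner_vlin_l. ring.
    * intros l Hl. unfold vlin. destruct (HH l Hl) as (_&_&H3). rewrite H3. ring.
    * intros l _. reflexivity.
Qed.

Lemma deriv_loc0 (h : R -> R) x d : locally x (fun u => h u = 0) -> is_derive h x d -> d = 0.
Proof.
intros HL HD.
assert (Z : is_derive h x 0).
{ apply (is_derive_ext_loc (fun _ => 0)).
  - apply (filter_imp (fun u => h u = 0)); [|exact HL]. intros u Hu. rewrite Hu. reflexivity.
  - apply (is_derive_const 0 x). }
rewrite <- (is_derive_unique _ _ _ HD). apply is_derive_unique. exact Z.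
Qed.

Lemma nuN_zero a b lo hi g k t N B :
  4 * a <> b ^ 2 -> 0 < k ->
  curve_in_M a lo hi g -> triharmonic a b lo hi g -> FrameH a b lo hi g k t N B ->
  forall s, inI lo hi s -> eta a b (g s) (N s) = 0.
Proof.
intros Hab Hk HC HT HF s0 Hs0.
destruct (Req_dec (eta a b (g s0) (N s0)) 0) as [E|Hn]; [exact E|exfalso].
assert (HcB : cB a b <> 0) by (unfold cB; lra).
pose proof (derivs a b lo hi g k t N B HC HF s0 Hs0) as (Dnu&DnN&DnB).
assert (Lnz : locally s0 (fun u => eta a b (g u) (N u) <> 0)).
{ apply (locally_nz (fun u => eta a b (g u) (N u))); [|exact Hn].
  apply (ex_derive_continuous (V := R_NormedModule)). eexists. exact DnN. }
set (S' := 2 * k ^ 2 + t ^ 2).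
set (h := fun u => S' * eta a b (g u) (B u) + k * t * eta a b (g u) (vel g u)).
assert (Hloc : locally s0 (fun u => h u = 0)).
{ apply (filter_imp (fun u => inI lo hi u /\ eta a b (g u) (N u) <> 0)).
  - intros u [Hu Hnu]. pose proof (pointwise a b lo hi g k t N B HC HT HF u Hu) as (_&BE&_).
    cbv zeta in BE. unfold h, S'.
    apply (Rmult_eq_reg_l (k * cB a b * eta a b (g u) (N u))).
    + rewrite BE. ring.
    + apply Rmult_integral_contrapositive_currified; [|exact Hnu].
      apply Rmult_integral_contrapositive_currified; lra.
  - apply filter_and; [apply inI_open; exact Hs0 | exact Lnz]. }
assert (Dh : is_derive h s0 (S' * (- t * eta a b (g s0) (N s0) + Om a b (g s0) (vel g s0) (B s0))
                              + k * t * (k * eta a b (g s0) (N s0)))).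
{ unfold h. apply (is_derive_plus (fun u => S' * eta a b (g u) (B u)) (fun u => k * t * eta a b (g u) (vel g u))).
  - apply is_derive_scal. exact DnB.
  - apply is_derive_scal. exact Dnu. }
pose proof (deriv_loc0 h s0 _ Hloc Dh) as Eq.
pose proof (pointwise a b lo hi g k t N B HC HT HF s0 Hs0) as (Par&BE&NE&OB&_).
cbv zeta in Par, BE, NE, OB.
set (nu := eta a b (g s0) (vel g s0)) in *.
set (n := eta a b (g s0) (N s0)) in *.
set (nB := eta a b (g s0) (B s0)) in *.
set (X := Om a b (g s0) (vel g s0) (B s0)) in *.
assert (BE' : S' * nB + k * t * nu = 0).
{ apply (Rmult_eq_reg_l (k * cB a b * n)).
  - unfold S'. rewrite BE. ring.
  - apply Rmult_integral_contrapositive_currified; [|exact Hn].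
    apply Rmult_integral_contrapositive_currified; lra. }
set (S := k ^ 2 + t ^ 2) in *.
assert (e4 : S ^ 2 = S' * (b ^ 2 / 4)).
{ assert (NE' : S^2 - S' * (cA a b - cB a b * (nu^2 + n^2)) - k * t * cB a b * nu * nB = 0).
  { apply (Rmult_eq_reg_l k); [|lra]. rewrite Rmult_0_r. rewrite <- NE. unfold S, S'. ring. }
  assert (T0 : S^2 - S' * (cA a b - cB a b) - cB a b * nB * (S' * nB + k * t * nu) = 0).
  { replace (S^2 - S' * (cA a b - cB a b) - cB a b * nB * (S' * nB + k * t * nu)) with
      ((S^2 - S' * (cA a b - cB a b * (nu^2 + n^2)) - k * t * cB a b * nu * nB)
       - S' * cB a b * (nu^2 + n^2 + nB^2 - 1)) by ring.
    rewrite NE', Par. ring. }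
  rewrite BE', Rmult_0_r, Rminus_0_r in T0.
  replace (b^2/4) with (cA a b - cB a b) by (unfold cA, cB; field). lra. }
assert (e1 : S' * X = t * n * S).
{ unfold S, S' in *. lra. }
assert (e2 : S' ^ 2 * (b ^ 2 / 4) * n ^ 2 = t ^ 2 * n ^ 2 * S ^ 2).
{ replace (S' ^ 2 * (b ^ 2 / 4) * n ^ 2) with (S'^2 * (b^2/4 * n^2)) by ring. rewrite <- OB. replace (S' ^ 2 * X ^ 2) with ((S' * X)^2) by ring. rewrite e1. ring. }
assert (n2 : n ^ 2 <> 0) by (apply pow_nonzero; exact Hn).
assert (e3 : S' ^ 2 * (b ^ 2 / 4) = t ^ 2 * S ^ 2).
{ apply (Rmult_eq_reg_r (n ^ 2)); [|exact n2]. rewrite e2. ring. }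
rewrite e4 in e3.
assert (Sp : 0 < S') by (unfold S'; nra).
assert (e5 : S' * (b ^ 2 / 4) * (S' - t ^ 2) = 0) by (rewrite Rmult_minus_distr_l; nra).
assert (Sd : S' - t ^ 2 <> 0) by (unfold S'; nra).
assert (b2 : b ^ 2 / 4 = 0).
{ apply Rmult_integral in e5. destruct e5 as [e5|e5]; [|contradiction].
  apply Rmult_integral in e5. destruct e5 as [e5|e5]; [lra|exact e5]. }
rewrite b2, Rmult_0_r in e4.
assert (0 < S) by (unfold S; nra). nra.
Qed.

Definition sc (w : R) (x : Rbar) : Rbar :=
  match x with Finite r => Finite (w * r) | p_infty => p_infty | m_infty => m_infty end.

Lemma lt_scale w l u : 0 < w -> (w * l < u <-> l < / w * u).
Proof.
intros Hw. split; intros H.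
- apply (Rmult_lt_reg_l w); [exact Hw|]. replace (w * (/ w * u)) with u by (field; lra). exact H.
- replace u with (w * (/ w * u)) by (field; lra). apply Rmult_lt_compat_l; assumption.
Qed.

Lemma inI_sc w lo hi u : 0 < w -> (inI (sc w lo) (sc w hi) u <-> inI lo hi (/ w * u)).
Proof.
intros Hw. unfold inI.
assert (A1 : Rbar_lt (sc w lo) u <-> Rbar_lt lo (/ w * u)).
{ destruct lo as [l| |]; simpl; [apply lt_scale; exact Hw | tauto | tauto]. }
assert (A2 : Rbar_lt u (sc w hi) <-> Rbar_lt (/ w * u) hi).
{ destruct hi as [h| |]; simpl; [|tauto|tauto].
  split; intros H.
  - apply (Rmult_lt_reg_l w); [exact Hw|]. replace (w * (/ w * u)) with u by (field; lra). exact H.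
  - replace u with (w * (/ w * u)) by (field; lra). apply Rmult_lt_compat_l; assumption. }
tauto.
Qed.

Lemma sc_lt w lo hi : 0 < w -> Rbar_lt lo hi -> Rbar_lt (sc w lo) (sc w hi).
Proof.
intros Hw H. destruct lo as [l| |]; destruct hi as [h| |]; simpl in *; try tauto.
apply Rmult_lt_compat_l; assumption.
Qed.

Lemma inI_nonempty lo hi : Rbar_lt lo hi -> exists s, inI lo hi s.
Proof.
intros H. unfold inI.
destruct lo as [l| |]; destruct hi as [h| |]; simpl in *; try tauto.
- exists ((l + h) / 2). simpl. lra.
- exists (l + 1). simpl. lra.
- exists (h - 1). simpl. lra.
- exists 0. simpl. tauto.
Qed.

Lemma inI_between lo hi s1 s2 x : inI lo hi s1 -> inI lo hi s2 ->
  Rmin s1 s2 <= x <= Rmax s1 s2 -> inI lo hi x.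
Proof.
intros [H1 H2] [H3 H4] [Hx1 Hx2]. unfold inI.
assert (m1 := Rmin_l s1 s2). assert (m2 := Rmin_r s1 s2).
assert (M1 := Rmax_l s1 s2). assert (M2 := Rmax_r s1 s2).
assert (Hm : Rmin s1 s2 = s1 \/ Rmin s1 s2 = s2) by (unfold Rmin; destruct (Rle_dec s1 s2); auto).
assert (HM : Rmax s1 s2 = s1 \/ Rmax s1 s2 = s2) by (unfold Rmax; destruct (Rle_dec s1 s2); auto).
split.
- destruct lo as [l| |]; simpl in *; try tauto. destruct Hm as [e|e]; rewrite e in Hx1; lra.
- destruct hi as [h| |]; simpl in *; try tauto. destruct HM as [e|e]; rewrite e in Hx2; lra.
Qed.

Lemma const_on lo hi (f df : R -> R) :
  (forall s, inI lo hi s -> is_derive f s (df s)) -> (forall s, inI lo hi s -> df s = 0) ->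
  forall s1 s2, inI lo hi s1 -> inI lo hi s2 -> f s2 = f s1.
Proof.
intros HD H0 s1 s2 I1 I2.
destruct (MVT_gen f s1 s2 df) as (x & Hx & E).
- intros x Hx. apply HD. apply (inI_between lo hi s1 s2); [exact I1|exact I2|lra].
- intros x Hx. apply continuity_pt_filterlim.
  apply (ex_derive_continuous (V := R_NormedModule)). eexists. apply HD.
  apply (inI_between lo hi s1 s2); assumption.
- rewrite H0 in E. lra. apply (inI_between lo hi s1 s2); assumption.
Qed.

Lemma ginner_pt a b p q X Y : p 0%nat = q 0%nat -> p 1%nat = q 1%nat ->
  ginner a b p X Y = ginner a b q X Y.
Proof. intros H0 H1. unfold ginner, gmet, theta, lam. rewrite H0, H1. reflexivity. Qed.

Lemma der_scal_comp (f : R -> R) w u : w <> 0 -> ex_derive f (/ w * u) ->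
  Derive (fun u => f (/ w * u)) u = / w * Derive f (/ w * u).
Proof.
intros Hw H. rewrite (Derive_comp f (fun u => / w * u)); [| exact H | auto_derive; exact I].
replace (Derive (fun u => / w * u) u) with (/ w). reflexivity.
symmetry. apply is_derive_unique. auto_derive. exact I. ring.
Qed.

Lemma smooth_n (P : R -> Prop) f : smooth_on P f -> forall n s, P s -> ex_derive_n f n s.
Proof. intros H n s Hs. destruct n; simpl; [exact I|]. apply H; exact Hs. Qed.

Lemma smooth_scal lo hi w f : 0 < w -> smooth_on (inI lo hi) f ->
  smooth_on (inI (sc w lo) (sc w hi)) (fun u => f (/ w * u)).
Proof.
intros Hw H n u Hu. apply inI_sc in Hu; [|exact Hw].
change (ex_derive_n (fun u => f (/ w * u)) (S n) u).
apply ex_derive_n_comp_scal.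
apply (filter_imp (inI lo hi)); [|apply inI_open; exact Hu].
intros y Hy k _. apply (smooth_n _ f H); exact Hy.
Qed.

Lemma smooth_lin lo hi f c : smooth_on (inI lo hi) f ->
  smooth_on (inI lo hi) (fun s => f s - c * s).
Proof.
intros H n s Hs.
change (ex_derive_n (fun s => f s - c * s) (S n) s).
apply (ex_derive_n_minus f (fun s => c * s)).
- apply (filter_imp (inI lo hi)); [|apply inI_open; exact Hs].
  intros y Hy k _. apply (smooth_n _ f H); exact Hy.
- apply filter_forall. intros y k _. apply ex_derive_n_scal_l.
  apply (ex_derive_n_ext (fun x => x ^ 1)). { intros t; ring. } apply ex_derive_n_pow.
Qed.

Definition alph (g : R -> vec) (c w : R) (u : R) : vec :=
  fun i => match i with 2%nat => g (/ w * u) 2%nat - c * (/ w * u) | _ => g (/ w * u) i end.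

Lemma vel_alph a lo hi g c w u : curve_in_M a lo hi g -> 0 < w -> inI lo hi (/ w * u) ->
  eq3 (vel (alph g c w) u) (vlin (/ w) (vel g (/ w * u)) (- (c / w)) E3).
Proof.
intros HC Hw Hu l Hl. unfold vel, vlin, E3.
destruct l as [|[|[|l]]]; try lia; cbn [Nat.eqb].
- unfold alph. rewrite (der_scal_comp (fun s => g s 0%nat)); [ring|lra|].
  apply (pos_der a lo hi); auto.
- unfold alph. rewrite (der_scal_comp (fun s => g s 1%nat)); [ring|lra|].
  apply (pos_der a lo hi); auto.
- unfold alph.
  assert (D2 : is_derive (fun s => g s 2%nat - c * s) (/ w * u) (Derive (fun s => g s 2%nat) (/ w * u) - c)).
  { replace (Derive (fun s => g s 2%nat) (/ w * u) - c) with
      (minus (Derive (fun s => g s 2%nat) (/ w * u)) (c * 1)) by (unfold minus, plus, opp; simpl; ring).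
    apply (is_derive_minus (fun s => g s 2%nat) (fun s => c * s)).
    - apply Derive_correct. apply (pos_der a lo hi); auto.
    - apply is_derive_scal. auto_derive; try exact I; try ring. }
  rewrite (der_scal_comp (fun s => g s 2%nat - c * s)); [|lra|eexists; exact D2].
  replace (Derive (fun s : R => g s 2%nat - c * s) (/ w * u)) with (Derive (fun s => g s 2%nat) (/ w * u) - c) by (symmetry; apply is_derive_unique; exact D2). field. lra.
Qed.

Lemma hopf_construct a b lo hi g k t N B c w :
  curve_in_M a lo hi g -> FrameH a b lo hi g k t N B -> 0 < w -> w ^ 2 = 1 - c ^ 2 ->
  (forall s, inI lo hi s -> eta a b (g s) (vel g s) = c) ->
  (forall s, inI lo hi s -> eta a b (g s) (N s) = 0) ->
  geodesic_of_hopf_cylinder a b lo hi g.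
Proof.
intros HC HF Hw Hw2 Hnu HnN.
assert (HC' := HC). destruct HC' as (Hlh & Hsm & HM).
destruct HF as [HD HF'].
assert (gEE : forall p, ginner a b p E3 E3 = 1).
{ intros p. unfold ginner, sum3, gmet, E3, kdelta2, theta; cbn [Nat.eqb andb Nat.ltb Nat.leb]. unfold Rdiv; ring. }
exists (sc w lo), (sc w hi), (alph g c w), (fun s => w * s), (fun s => c * s).
split; [|split; [|split]].
-
  split; [apply sc_lt; assumption|]. split.
  + intros i Hi. destruct i as [|[|[|i]]]; try lia.
    * apply (smooth_scal lo hi w (fun s => g s 0%nat)); [exact Hw | apply Hsm; lia].
    * apply (smooth_scal lo hi w (fun s => g s 1%nat)); [exact Hw | apply Hsm; lia].
    * apply (smooth_scal lo hi w (fun s => g s 2%nat - c * s)); [exact Hw|].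
      apply smooth_lin. apply Hsm; lia.
  + intros u Hu. apply inI_sc in Hu; [|exact Hw]. specialize (HM _ Hu).
    unfold inM, lam in *. unfold alph. exact HM.
-
  intros u Hu. apply inI_sc in Hu; [|exact Hw].
  rewrite (ginner_ext a b _ _ _ _ _ (vel_alph a lo hi g c w u HC Hw Hu) (vel_alph a lo hi g c w u HC Hw Hu)).
  rewrite (ginner_pt a b (alph g c w u) (g (/ w * u))) by reflexivity.
  rewrite !ginner_vlin_l, !ginner_vlin_r.
  destruct (HF' _ Hu) as (gTT&_).
  assert (E1 := Hnu _ Hu). unfold eta in E1.
  rewrite gTT, gEE, E1. rewrite (ginner_sym a b _ E3), E1.
  replace (/ w * (/ w * 1 + - (c / w) * c) + - (c / w) * (/ w * c + - (c / w) * 1)) with ((1 - c^2) / w^2)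
    by (field; lra).
  rewrite <- Hw2. field. lra.
- intros u Hu. apply inI_sc in Hu; [|exact Hw].
  rewrite (ginner_ext a b _ _ _ E3 E3 (vel_alph a lo hi g c w u HC Hw Hu) (eq3_refl _)).
  rewrite (ginner_pt a b (alph g c w u) (g (/ w * u))) by reflexivity.
  rewrite ginner_vlin_l.
  assert (E1 := Hnu _ Hu). unfold eta in E1. rewrite E1, gEE. field. lra.
- intros s Hs.
  assert (Hs' : inI lo hi (/ w * (w * s))) by (replace (/ w * (w * s)) with s by (field; lra); exact Hs).
  assert (ws : / w * (w * s) = s) by (field; lra).
  split; [apply inI_sc; [exact Hw | exact Hs']|].
  split; [auto_derive; exact I|].
  split; [auto_derive; exact I|].
  destruct (HF' _ Hs) as (gTT&gNN&gBB&gTN&gTB&gNB&HH).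
  assert (C1 : eq3 (covT a b g 1 s) (vlin k (N s) 0 (N s))).
  { intros l Hl. unfold vlin. destruct (HH l Hl) as (H1&_&_). rewrite H1. ring. }
  split; [|split].
  + intros i Hi. unfold psi, alph. rewrite ws.
    destruct i as [|[|[|i]]]; try lia; cbn [Nat.eqb]; try reflexivity. ring.
  + rewrite (ginner_ext a b _ _ _ _ _ C1 (vel_alph a lo hi g c w (w * s) HC Hw Hs')).
    rewrite ws. rewrite !ginner_vlin_l, !ginner_vlin_r.
    rewrite (ginner_sym a b _ (N s) (vel g s)), gTN.
    assert (E0 := HnN _ Hs). unfold eta in E0. rewrite E0. ring.
  + rewrite (ginner_ext a b _ _ _ E3 E3 C1 (eq3_refl _)). rewrite ginner_vlin_l.
    assert (E0 := HnN _ Hs). unfold eta in E0. rewrite E0. ring.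
Qed.

Theorem corollary4p8 (a b : R) (lo hi : Rbar) (gamma : R -> vec) (kappa tau : R) :
  4 * a <> b ^ 2 ->
  curve_in_M a lo hi gamma ->
  arclength a b lo hi gamma ->
  triharmonic a b lo hi gamma ->
  frenet_helix a b lo hi gamma kappa tau ->
  tau <> 0 ->
  geodesic_of_hopf_cylinder a b lo hi gamma.
Proof.
intros Hab HC Har HT [Hk [N [B [HD HF]]]] Ht.
assert (HF2 : FrameH a b lo hi gamma kappa tau N B) by (split; assumption).
pose proof (nuN_zero a b lo hi gamma kappa tau N B Hab Hk HC HT HF2) as HnN.
destruct (inI_nonempty lo hi ltac:(destruct HC; assumption)) as [s0 Hs0].
set (c := eta a b (gamma s0) (vel gamma s0)).
assert (Hnu : forall s, inI lo hi s -> eta a b (gamma s) (vel gamma s) = c).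
{ intros s Hs. unfold c.
  apply (const_on lo hi (fun u => eta a b (gamma u) (vel gamma u)) (fun u => kappa * eta a b (gamma u) (N u))).
  - intros u Hu. apply (derivs a b lo hi gamma kappa tau N B HC HF2 u Hu).
  - intros u Hu. rewrite HnN by exact Hu. ring.
  - exact Hs0.
  - exact Hs. }
pose proof (pointwise a b lo hi gamma kappa tau N B HC HT HF2 s0 Hs0) as (Par&_&_&_&OMN).
cbv zeta in Par, OMN. fold c in Par. rewrite (HnN s0 Hs0) in Par.
assert (Hc : c ^ 2 < 1).
{ destruct (Rle_lt_or_eq_dec (c^2) 1 ltac:(nra)) as [H|H]; [exact H|exfalso].
  assert (nB0 : eta a b (gamma s0) (B s0) = 0) by nra.
  rewrite nB0 in OMN.
  assert (Om0 : Om a b (gamma s0) (vel gamma s0) (N s0) = 0) by nra.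
  pose proof (derivs a b lo hi gamma kappa tau N B HC HF2 s0 Hs0) as (_&DnN&_).
  assert (Z := deriv_loc0 _ s0 _ ltac:(apply (filter_imp (inI lo hi)); [intros u Hu; apply HnN; exact Hu | apply inI_open; exact Hs0]) DnN).
  fold c in Z. rewrite nB0, Om0 in Z.
  assert (c = 0) by (apply (Rmult_eq_reg_l kappa); lra). subst c. nra. }
assert (Hpos : 0 < 1 - c ^ 2) by lra.
apply (hopf_construct a b lo hi gamma kappa tau N B c (sqrt (1 - c ^ 2)) HC HF2).
- apply sqrt_lt_R0. exact Hpos.
- rewrite <- (sqrt_sqrt (1 - c^2)) at 2 by lra. ring.
- exact Hnu.
- exact HnN.
Qed.
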